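(* Let $I\subset\mathbb R$ be an interval and $\alpha\in C^\infty(I,C^\infty(\mathbb S))$ a solution of $\frac{\partial\alpha_\tau}{\partial\tau}=-\alpha_\tau(\Lambda\alpha_\tau)+(\mathcal H\alpha_\tau)(D\alpha_\tau)$ on $I$ such that $\alpha_\tau$ is a positive function for every $\tau\in I$. Then $\int_0^{2\pi}\alpha_\tau^{-1}\,d\theta$ is independent of $\tau\in I$.
   Context: $D=-i\,d/d\theta$, $\Lambda e^{in\theta}=|n|e^{in\theta}$, Hilbert transform $\mathcal H\mathbf 1=0$, $\mathcal He^{in\theta}=\mathrm{sgn}(n)e^{in\theta}$ ($n\ne0$); products are pointwise products of functions on $\mathbb S$. *)

(* Defs.v *)
From Stdlib Require Import Reals ZArith.
From Coquelicot Require Import Coquelicot.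
Open Scope R_scope.

Definition is_interval (I : R -> Prop) : Prop :=
  forall a b c, I a -> I c -> a <= b -> b <= c -> I b.

(* derivative of f at t, taken within the interval I (one-sided at endpoints) *)
Definition is_deriv_in (I : R -> Prop) (f : R -> R) (t l : R) : Prop :=
  filterlim (fun s => (f s - f t) / (s - t))
    (within (fun s => I s /\ s <> t) (locally t)) (locally l).

(* alpha : I x S -> R is C^infinity, S = R / 2 pi Z realised by 2 pi-periodicity
   in theta; d j k is the mixed partial derivative d_tau^j d_theta^k alpha. *)
Definition smooth_IxS (I : R -> Prop) (a : R -> R -> R) : Prop :=
  (forall t x, I t -> a t (x + 2 * PI) = a t x) /\
  exists d : nat -> nat -> R -> R -> R,
    (forall t x, I t -> d O O t x = a t x) /\
    (forall j k t x, I t -> is_derive (d j k t) x (d j (S k) t x)) /\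
    (forall j k t x, I t -> is_deriv_in I (fun s => d j k s x) t (d (S j) k t x)) /\
    (forall j k t x, I t ->
       filterlim (fun p : R * R => d j k (fst p) (snd p))
         (within (fun p : R * R => I (fst p)) (locally (t, x)))
         (locally (d j k t x))).

(* n-th Fourier coefficient (1/2pi) int_0^{2pi} f(x) e^{-inx} dx *)
Definition fcoef (f : R -> R) (n : Z) : C :=
  (/ (2 * PI) * RInt (fun x => f x * cos (IZR n * x)) 0 (2 * PI),
   - (/ (2 * PI) * RInt (fun x => f x * sin (IZR n * x)) 0 (2 * PI))).

Definition cexpi (n : Z) (x : R) : C := (cos (IZR n * x), sin (IZR n * x)).

(* Fourier multiplier: e^{inx} |-> m n e^{inx}, the series over Z summed as the
   limit of symmetric partial sums sum_{n=-N}^{N}. *)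
Definition fmult (m : Z -> R) (f : R -> R) (x : R) : C :=
  @lim (CompleteNormedModule.CompleteSpace _ C_CompleteNormedModule) (filtermap
        (fun N : nat =>
           sum_n (fun k : nat =>
                    let n := (Z.of_nat k - Z.of_nat N)%Z in
                    Cmult (Cmult (RtoC (m n)) (fcoef f n)) (cexpi n x))
                 (2 * N)%nat)
        eventually).

Definition Lam (f : R -> R) : R -> C := fmult (fun n => IZR (Z.abs n)) f.
(* Hilbert transform: H 1 = 0, H e^{in} = sgn(n) e^{in} *)
Definition Hilb (f : R -> R) : R -> C := fmult (fun n => IZR (Z.sgn n)) f.
Definition Dop (f : R -> R) (x : R) : C := Cmult (Copp Ci) (RtoC (Derive f x)).

(* Main.v *)
Require Import Defs.
From Stdlib Require Import Reals ZArith Lra Lia.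
From Coquelicot Require Import Coquelicot.
Open Scope R_scope.

Lemma sin_nP (k : nat) : sin (INR k * (2 * PI)) = 0.
Proof.
  replace (INR k * (2 * PI)) with (0 + 2 * INR k * PI) by ring.
  rewrite sin_period; apply sin_0.
Qed.
Lemma cos_nP (k : nat) : cos (INR k * (2 * PI)) = 1.
Proof.
  replace (INR k * (2 * PI)) with (0 + 2 * INR k * PI) by ring.
  rewrite cos_period; apply cos_0.
Qed.

Lemma cont_of_der (f f' : R -> R) x : is_derive f x (f' x) -> continuous f x.
Proof. intros H; apply (ex_derive_continuous (V:=R_NormedModule)); eexists; eauto. Qed.

Lemma exRI (f : R -> R) a b : (forall z, continuous f z) -> ex_RInt f a b.
Proof. intros; apply (ex_RInt_continuous (V:=R_CompleteNormedModule)); auto. Qed.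
Lemma cmul (f g : R -> R) x : continuous f x -> continuous g x -> continuous (fun y => f y * g y) x.
Proof. intros; apply (continuous_mult (K:=R_AbsRing)); auto. Qed.
Lemma cplus (f g : R -> R) x : continuous f x -> continuous g x -> continuous (fun y => f y + g y) x.
Proof. intros; apply (continuous_plus (V:=R_NormedModule)); auto. Qed.
Lemma cder (f : R -> R) x : ex_derive f x -> continuous f x.
Proof. intros; apply (ex_derive_continuous (V:=R_NormedModule)); auto. Qed.

Ltac toR := cbv beta; match goal with |- @eq _ ?a ?b => change (@eq R a b) end.
Ltac rring := cbv beta; match goal with |- @eq _ ?a ?b => change (@eq R a b) end; ring.
Lemma dval (f : R -> R) x l l' : is_derive f x l -> l = l' -> is_derive f x l'.
Proof. intros H ->; exact H. Qed.
Lemma dmul (f g : R -> R) x df dg : is_derive f x df -> is_derive g x dg ->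
  is_derive (fun y => f y * g y) x (df * g x + f x * dg).
Proof. intros H1 H2. apply (is_derive_mult (K:=R_AbsRing) f g x df dg H1 H2). intros; apply Rmult_comm. Qed.

Lemma ibp_cos (h h' : R -> R) (k : nat) :
  (forall x, is_derive h x (h' x)) -> (forall x, continuous h' x) ->
  RInt (fun x => h x * cos (INR (S k) * x)) 0 (2*PI) =
  - / INR (S k) * RInt (fun x => h' x * sin (INR (S k) * x)) 0 (2*PI).
Proof.
  intros Hd Hc. set (n := INR (S k)).
  assert (Hn : 0 < n) by (unfold n; apply lt_0_INR; lia).
  assert (E1 : ex_RInt (fun x => h x * cos (n * x)) 0 (2*PI)).
  { apply exRI; intros z.
    apply cmul; [eapply cont_of_der; eauto|].
    apply (cder (fun x => cos (n*x))); auto_derive; auto. }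
  assert (E2 : ex_RInt (fun x => h' x * sin (n * x)) 0 (2*PI)).
  { apply exRI; intros z.
    apply cmul; [auto|].
    apply (cder (fun x => sin (n*x))); auto_derive; auto. }
  assert (H : is_RInt (fun x => h' x * sin (n * x) + n * (h x * cos (n * x))) 0 (2*PI)
     (minus (h (2*PI) * sin (n * (2*PI))) (h 0 * sin (n * 0)))).
  { apply (is_RInt_derive (fun x => h x * sin (n * x))).
    - intros x _. eapply dval. apply dmul. apply Hd.
      assert (Hs: is_derive (fun x => sin (n*x)) x (n * cos (n*x))) by (auto_derive; auto; ring).
      apply Hs. rring.
    - intros x _. apply cplus.
      + apply cmul; [auto|].
        apply (cder (fun x => sin (n*x))); auto_derive; auto.
      + apply (continuous_mult (K:=R_AbsRing) (fun _ => n)). apply continuous_const.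
        apply cmul; [eapply cont_of_der; eauto|].
        apply (cder (fun x => cos (n*x))); auto_derive; auto. }
  apply (is_RInt_unique (V:=R_CompleteNormedModule)) in H.
  assert (Hz : sin (n*(2*PI)) = 0) by (unfold n; apply sin_nP). rewrite Hz in H. repeat rewrite Rmult_0_r in H. rewrite sin_0 in H.
  rewrite (RInt_plus (V:=R_CompleteNormedModule)) in H; auto.
  2:{ apply (ex_RInt_scal (V:=R_NormedModule) _ _ _ n) in E1. exact E1. }
  rewrite (RInt_scal (V:=R_CompleteNormedModule) (fun x => h x * cos (n * x))) in H; auto.
  unfold plus, minus, scal, opp in H; simpl in H. unfold mult in H; simpl in H.
  fold n. revert H.
  generalize (RInt (fun x : R => h x * cos (n * x)) 0 (2 * PI)) (RInt (fun x : R => h' x * sin (n * x)) 0 (2 * PI)).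
  intros a b H. change R in a, b. unfold plus in H; simpl in H. toR. field_simplify_eq; [|lra]. lra.
Qed.

Lemma ibp_sin (h h' : R -> R) (k : nat) :
  (forall x, is_derive h x (h' x)) -> (forall x, continuous h' x) -> h (2*PI) = h 0 ->
  RInt (fun x => h x * sin (INR (S k) * x)) 0 (2*PI) =
  / INR (S k) * RInt (fun x => h' x * cos (INR (S k) * x)) 0 (2*PI).
Proof.
  intros Hd Hc Hp. set (n := INR (S k)).
  assert (Hn : 0 < n) by (unfold n; apply lt_0_INR; lia).
  assert (E1 : ex_RInt (fun x => h x * sin (n * x)) 0 (2*PI)).
  { apply exRI; intros z.
    apply cmul; [eapply cont_of_der; eauto|].
    apply (cder (fun x => sin (n*x))); auto_derive; auto. }
  assert (E2 : ex_RInt (fun x => h' x * cos (n * x)) 0 (2*PI)).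
  { apply exRI; intros z.
    apply cmul; [auto|].
    apply (cder (fun x => cos (n*x))); auto_derive; auto. }
  assert (H : is_RInt (fun x => h' x * cos (n * x) + (-n) * (h x * sin (n * x))) 0 (2*PI)
     (minus (h (2*PI) * cos (n * (2*PI))) (h 0 * cos (n * 0)))).
  { apply (is_RInt_derive (fun x => h x * cos (n * x))).
    - intros x _. eapply dval. apply dmul. apply Hd.
      assert (Hs: is_derive (fun x => cos (n*x)) x (- n * sin (n*x))) by (auto_derive; auto; ring).
      apply Hs. rring.
    - intros x _. apply cplus.
      + apply cmul; [auto|].
        apply (cder (fun x => cos (n*x))); auto_derive; auto.
      + apply (cmul (fun _ => -n)). apply continuous_const.
        apply cmul; [eapply cont_of_der; eauto|].
        apply (cder (fun x => sin (n*x))); auto_derive; auto. }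
  apply (is_RInt_unique (V:=R_CompleteNormedModule)) in H.
  assert (Hz : cos (n*(2*PI)) = 1) by (unfold n; apply cos_nP). rewrite Hz in H.
  repeat rewrite Rmult_0_r in H. rewrite cos_0 in H.
  rewrite (RInt_plus (V:=R_CompleteNormedModule)) in H; auto.
  2:{ apply (ex_RInt_scal (V:=R_NormedModule) _ _ _ (-n)) in E1. exact E1. }
  rewrite (RInt_scal (V:=R_CompleteNormedModule) (fun x => h x * sin (n * x))) in H; auto.
  unfold plus, minus, scal, opp in H; simpl in H. unfold mult in H; simpl in H.
  fold n. revert H.
  generalize (RInt (fun x : R => h x * sin (n * x)) 0 (2 * PI)) (RInt (fun x : R => h' x * cos (n * x)) 0 (2 * PI)).
  intros a b H. change R in a, b. unfold plus in H; simpl in H. rewrite Hp in H. toR. field_simplify_eq; [|lra]. lra.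
Qed.

Lemma abs_int_trig_le (g : R -> R) (c : R -> R) :
  (forall x, continuous g x) -> (forall x, continuous c x) -> (forall x, Rabs (c x) <= 1) ->
  Rabs (RInt (fun x => g x * c x) 0 (2*PI)) <= RInt (fun x => Rabs (g x)) 0 (2*PI).
Proof.
  intros Hg Hc Hb. assert (HP : 0 <= 2*PI) by (pose proof PI_RGT_0; lra).
  eapply Rle_trans. apply abs_RInt_le; auto. apply exRI; intros; apply cmul; auto.
  apply RInt_le; auto.
  - apply exRI; intros z. apply (continuous_comp (fun x => g x * c x) Rabs). apply cmul; auto. apply continuous_Rabs.
  - apply exRI; intros z. apply (continuous_comp g Rabs); auto. apply continuous_Rabs.
  - intros x _. rewrite Rabs_mult. specialize (Hb x). pose proof (Rabs_pos (g x)).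
    nra.
Qed.

Section Coef.
Variables f f1 f2 f3 : R -> R.
Hypothesis D0 : forall x, is_derive f x (f1 x).
Hypothesis D1 : forall x, is_derive f1 x (f2 x).
Hypothesis D2 : forall x, is_derive f2 x (f3 x).
Hypothesis C3 : forall x, continuous f3 x.
Hypothesis P0 : f (2*PI) = f 0.
Hypothesis P1 : f1 (2*PI) = f1 0.
Hypothesis P2 : f2 (2*PI) = f2 0.

Definition CstF : R := RInt (fun x => Rabs (f3 x)) 0 (2*PI).

Lemma C1c x : continuous f1 x. Proof. eapply cont_of_der; eauto. Qed.
Lemma C2c x : continuous f2 x. Proof. eapply cont_of_der; eauto. Qed.

Lemma CstF_pos : 0 <= CstF.
Proof.
  unfold CstF. apply RInt_ge_0. pose proof PI_RGT_0; lra.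
  apply exRI; intros z. apply (continuous_comp f3 Rabs); auto. apply continuous_Rabs.
  intros; apply Rabs_pos.
Qed.

Lemma coef_cos (k : nat) :
  Rabs (RInt (fun x => f x * cos (INR (S k) * x)) 0 (2*PI)) <= CstF / (INR (S k))^3.
Proof.
  assert (Hn : 0 < INR (S k)) by (apply lt_0_INR; lia).
  rewrite (ibp_cos f f1 k D0 C1c), (ibp_sin f1 f2 k D1 C2c P1), (ibp_cos f2 f3 k D2 C3).
  replace (- / INR (S k) * (/ INR (S k) * (- / INR (S k) * RInt (fun x : R => f3 x * sin (INR (S k) * x)) 0 (2 * PI))))
    with (RInt (fun x : R => f3 x * sin (INR (S k) * x)) 0 (2 * PI) / (INR (S k))^3) by (field; lra).
  unfold Rdiv. rewrite Rabs_mult, Rabs_inv, (Rabs_right (_^3)) by (apply Rle_ge; apply pow_le; lra).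
  apply Rmult_le_compat_r. left; apply Rinv_0_lt_compat, pow_lt; lra.
  apply (abs_int_trig_le f3 (fun x => sin (INR (S k) * x))); auto.
  intros; apply (cder (fun x => sin (INR (S k) * x))); auto_derive; auto.
  intros; apply Rabs_le, SIN_bound.
Qed.

Lemma coef_sin (k : nat) :
  Rabs (RInt (fun x => f x * sin (INR (S k) * x)) 0 (2*PI)) <= CstF / (INR (S k))^3.
Proof.
  assert (Hn : 0 < INR (S k)) by (apply lt_0_INR; lia).
  rewrite (ibp_sin f f1 k D0 C1c P0), (ibp_cos f1 f2 k D1 C2c), (ibp_sin f2 f3 k D2 C3 P2).
  replace (/ INR (S k) * (- / INR (S k) * (/ INR (S k) * RInt (fun x : R => f3 x * cos (INR (S k) * x)) 0 (2 * PI))))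
    with (- RInt (fun x : R => f3 x * cos (INR (S k) * x)) 0 (2 * PI) / (INR (S k))^3) by (field; lra).
  unfold Rdiv. rewrite Rabs_mult, Rabs_Ropp, Rabs_inv, (Rabs_right (_^3)) by (apply Rle_ge; apply pow_le; lra).
  apply Rmult_le_compat_r. left; apply Rinv_0_lt_compat, pow_lt; lra.
  apply (abs_int_trig_le f3 (fun x => cos (INR (S k) * x))); auto.
  intros; apply (cder (fun x => cos (INR (S k) * x))); auto_derive; auto.
  intros; apply Rabs_le, COS_bound.
Qed.
End Coef.
Lemma ballC (x y : C) (e : R) : @ball (CompleteNormedModule.CompleteSpace _ C_CompleteNormedModule) x e y <-> Rabs (fst y - fst x) < e /\ Rabs (snd y - snd x) < e.
Proof. destruct x, y; simpl. split; intros [H1 H2]; split; auto. Qed.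

Lemma small_nat (E eps : R) : 0 <= E -> 0 < eps -> exists N, (1 <= N)%nat /\ E / INR N < eps.
Proof.
  intros HE He. destruct (archimed_cor1 (eps / (E+1))) as [N [H1 H2]].
  apply Rdiv_lt_0_compat; lra.
  exists N; split; [lia|]. assert (0 < INR N) by (apply lt_0_INR; lia).
  unfold Rdiv. apply Rle_lt_trans with (E * (eps/(E+1))).
  apply Rmult_le_compat_l; lra.
  unfold Rdiv. rewrite <- Rmult_assoc. apply Rlt_le_trans with (eps * ((E+1) * /(E+1))).
  2:{ rewrite Rinv_r by lra; lra. }
  rewrite (Rmult_comm E eps), Rmult_assoc. apply Rmult_lt_compat_l; auto.
  apply Rmult_lt_compat_r. apply Rinv_0_lt_compat; lra. lra.
Qed.

Lemma lim_bound (u : nat -> C) (E : R) : 0 <= E ->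
  (forall N M, (1 <= N <= M)%nat -> Rabs (fst (u M) - fst (u N)) <= E / INR N /\ Rabs (snd (u M) - snd (u N)) <= E / INR N) ->
  forall N, (1 <= N)%nat ->
  Rabs (fst (@lim (CompleteNormedModule.CompleteSpace _ C_CompleteNormedModule) (filtermap u eventually)) - fst (u N)) <= E / INR N /\
  Rabs (snd (@lim (CompleteNormedModule.CompleteSpace _ C_CompleteNormedModule) (filtermap u eventually)) - snd (u N)) <= E / INR N.
Proof.
  intros HE Hu N HN.
  set (F := filtermap u eventually).
  assert (PF : ProperFilter F) by (apply filtermap_proper_filter; apply eventually_filter).
  assert (HC : @cauchy (CompleteNormedModule.CompleteSpace _ C_CompleteNormedModule) F).
  { intros eps. destruct (small_nat E eps HE (cond_pos eps)) as [N0 [H0 H0']].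
    exists (u N0). exists N0. intros M HM. apply ballC.
    destruct (Hu N0 M) as [A B]; [lia|]. split; lra. }
  set (l := @lim (CompleteNormedModule.CompleteSpace _ C_CompleteNormedModule) F).
  assert (Hl : forall eps : posreal, exists N1, forall M, (N1 <= M)%nat ->
            Rabs (fst (u M) - fst l) < eps /\ Rabs (snd (u M) - snd l) < eps).
  { intros eps. destruct (@complete_cauchy (CompleteNormedModule.CompleteSpace _ C_CompleteNormedModule) F PF HC eps) as [N1 HN1]. exists N1.
    intros M HM. apply ballC. apply HN1; auto. }
  split; apply le_epsilon; intros eps He;
  destruct (Hl (mkposreal eps He)) as [N1 HN1]; cbn [pos] in HN1;
  destruct (HN1 (max N N1)) as [A B]; try lia;
  destruct (Hu N (max N N1)) as [A' B']; try lia.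
  - replace (fst l - fst (u N)) with (- (fst (u (max N N1)) - fst l) + (fst (u (max N N1)) - fst (u N))) by ring.
    eapply Rle_trans. apply Rabs_triang. rewrite Rabs_Ropp. lra.
  - replace (snd l - snd (u N)) with (- (snd (u (max N N1)) - snd l) + (snd (u (max N N1)) - snd (u N))) by ring.
    eapply Rle_trans. apply Rabs_triang. rewrite Rabs_Ropp. lra.
Qed.

Fixpoint psum {G : AbelianMonoid} (a : nat -> G) (N : nat) : G :=
  match N with O => zero | S N' => plus (psum a N') (a N') end.

Lemma sum_shift {G : AbelianMonoid} (a : nat -> G) n :
  sum_n a (S n) = plus (a O) (sum_n (fun k => a (S k)) n).
Proof.
  induction n.
  - rewrite sum_Sn, !sum_O. reflexivity.
  - rewrite sum_Sn, IHn, sum_Sn, plus_assoc. reflexivity.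
Qed.

Lemma sym_sum {G : AbelianMonoid} (h : Z -> G) N :
  sum_n (fun k => h (Z.of_nat k - Z.of_nat N)%Z) (2*N) =
  plus (h 0%Z) (psum (fun k => plus (h (Z.of_nat (S k))) (h (- Z.of_nat (S k))%Z)) N).
Proof.
  induction N.
  - simpl. rewrite sum_O, plus_zero_r. reflexivity.
  - replace (2 * S N)%nat with (S (S (2 * N))) by lia.
    rewrite sum_Sn, sum_shift.
    rewrite (sum_n_ext _ (fun k => h (Z.of_nat k - Z.of_nat N)%Z)).
    2:{ intros k. f_equal. lia. }
    rewrite IHN. simpl psum.
    replace (Z.of_nat 0 - Z.of_nat (S N))%Z with (- Z.of_nat (S N))%Z by lia.
    replace (Z.of_nat (S (S (2 * N))) - Z.of_nat (S N))%Z with (Z.of_nat (S N)) by lia.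
    set (x := h (- Z.of_nat (S N))%Z). set (y := h (Z.of_nat (S N))).
    set (P := psum _ N).
    rewrite (plus_comm x (plus (h 0%Z) P)), <- plus_assoc, <- plus_assoc.
    rewrite (plus_comm x y). reflexivity.
Qed.

Definition hterm (m : Z -> R) (f : R -> R) (x : R) (z : Z) : C :=
  Cmult (Cmult (RtoC (m z)) (fcoef f z)) (cexpi z x).

Lemma IZR_S k : IZR (Z.of_nat (S k)) = INR (S k).
Proof. rewrite INR_IZR_INZ; reflexivity. Qed.

Lemma pair_formula (m : Z -> R) (f : R -> R) (x : R) (k : nat) :
  (forall z, continuous f z) ->
  let r := INR (S k) in
  let A := RInt (fun y => f y * cos (r * y)) 0 (2*PI) in
  let B := RInt (fun y => f y * sin (r * y)) 0 (2*PI) in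
  fst (plus (hterm m f x (Z.of_nat (S k))) (hterm m f x (- Z.of_nat (S k)))) =
    (m (Z.of_nat (S k)) + m (- Z.of_nat (S k))%Z) / (2*PI) * (A * cos (r*x) + B * sin (r*x)) /\
  snd (plus (hterm m f x (Z.of_nat (S k))) (hterm m f x (- Z.of_nat (S k)))) =
    (m (Z.of_nat (S k)) - m (- Z.of_nat (S k))%Z) / (2*PI) * (A * sin (r*x) - B * cos (r*x)).
Proof.
  intros Hf r A B.
  assert (HA : RInt (fun y => f y * cos (IZR (- Z.of_nat (S k)) * y)) 0 (2*PI) = A).
  { apply RInt_ext. intros y _. rewrite opp_IZR, IZR_S, Ropp_mult_distr_l_reverse, cos_neg. reflexivity. }
  assert (HB : RInt (fun y => f y * sin (IZR (- Z.of_nat (S k)) * y)) 0 (2*PI) = - B).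
  { rewrite (RInt_ext _ (fun y => opp (f y * sin (r * y)))).
    rewrite (RInt_opp (V:=R_CompleteNormedModule)). reflexivity.
    apply exRI; intros z; apply cmul; auto. apply (cder (fun y => sin (r*y))); auto_derive; auto.
    intros y _. rewrite opp_IZR, IZR_S, Ropp_mult_distr_l_reverse, sin_neg. rewrite <- Ropp_mult_distr_r. reflexivity. }
  assert (HA' : RInt (fun y => f y * cos (IZR (Z.of_nat (S k)) * y)) 0 (2*PI) = A).
  { apply RInt_ext. intros y _. rewrite IZR_S. reflexivity. }
  assert (HB' : RInt (fun y => f y * sin (IZR (Z.of_nat (S k)) * y)) 0 (2*PI) = B).
  { apply RInt_ext. intros y _. rewrite IZR_S. reflexivity. }
  unfold hterm, fcoef, cexpi. rewrite HA, HB, HA', HB'.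
  rewrite !opp_IZR, !IZR_S. fold r.
  rewrite Ropp_mult_distr_l_reverse, cos_neg, sin_neg.
  assert (PI <> 0) by (pose proof PI_RGT_0; lra).
  split; simpl; field; auto.
Qed.

Fixpoint rsum (a : nat -> R) (N : nat) : R :=
  match N with O => 0 | S N' => rsum a N' + a N' end.

Lemma fst_psum (a : nat -> C) N : fst (psum a N) = rsum (fun k => fst (a k)) N.
Proof. induction N; simpl; auto. rewrite <- IHN. reflexivity. Qed.
Lemma snd_psum (a : nat -> C) N : snd (psum a N) = rsum (fun k => snd (a k)) N.
Proof. induction N; simpl; auto. rewrite <- IHN. reflexivity. Qed.

Lemma rsum_ext (a b : nat -> R) N : (forall k, a k = b k) -> rsum a N = rsum b N.
Proof. intros H; induction N; simpl; auto. rewrite IHN, H; auto. Qed.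

Lemma rsum_tail (a : nat -> R) (E : R) : 0 <= E ->
  (forall k, (1 <= k)%nat -> Rabs (a k) <= E / (INR (S k))^2) ->
  forall N M, (1 <= N <= M)%nat -> Rabs (rsum a M - rsum a N) <= E / INR N.
Proof.
  intros HE Ha N M HNM.
  assert (H : forall d, Rabs (rsum a (N + d) - rsum a N) <= E * (/ INR N - / INR (N + d))).
  { induction d.
    - rewrite Nat.add_0_r, Rminus_diag, Rabs_R0. lra.
    - replace (N + S d)%nat with (S (N + d)) by lia. simpl rsum.
      replace (rsum a (N + d) + a (N + d)%nat - rsum a N) with ((rsum a (N + d) - rsum a N) + a (N+d)%nat) by ring.
      eapply Rle_trans. apply Rabs_triang.
      specialize (Ha (N + d)%nat ltac:(lia)).
      assert (H1 : 0 < INR (N + d)) by (apply lt_0_INR; lia).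
      rewrite S_INR in *.
      assert (E / (INR (N + d) + 1) ^ 2 <= E * (/ INR (N + d) - / (INR (N + d) + 1))).
      { unfold Rdiv. apply Rmult_le_compat_l; auto.
        apply Rle_trans with (/ (INR (N+d) * (INR (N + d) + 1))).
        - apply Rinv_le_contravar. nra. simpl; nra.
        - right. field. lra. }
      lra. }
  replace M with (N + (M - N))%nat by lia. eapply Rle_trans. apply H.
  unfold Rdiv. apply Rmult_le_compat_l; auto.
  assert (0 < / INR (N + (M - N))) by (apply Rinv_0_lt_compat, lt_0_INR; lia). lra.
Qed.

Definition Ak (f : R -> R) (k : nat) := RInt (fun y => f y * cos (INR (S k) * y)) 0 (2*PI).
Definition Bk (f : R -> R) (k : nat) := RInt (fun y => f y * sin (INR (S k) * y)) 0 (2*PI).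
Definition LN (f : R -> R) (x : R) (N : nat) :=
  rsum (fun k => INR (S k) / PI * (Ak f k * cos (INR (S k) * x) + Bk f k * sin (INR (S k) * x))) N.
Definition KN (f : R -> R) (x : R) (N : nat) :=
  rsum (fun k => / PI * (Ak f k * sin (INR (S k) * x) - Bk f k * cos (INR (S k) * x))) N.

Definition useq (m : Z -> R) (f : R -> R) (x : R) (N : nat) : C :=
  sum_n (fun k => hterm m f x (Z.of_nat k - Z.of_nat N)%Z) (2*N).

Lemma Lam_eq f x : Lam f x = @lim (CompleteNormedModule.CompleteSpace _ C_CompleteNormedModule)
   (filtermap (useq (fun n => IZR (Z.abs n)) f x) eventually).
Proof. reflexivity. Qed.
Lemma Hilb_eq f x : Hilb f x = @lim (CompleteNormedModule.CompleteSpace _ C_CompleteNormedModule)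
   (filtermap (useq (fun n => IZR (Z.sgn n)) f x) eventually).
Proof. reflexivity. Qed.

Lemma PI_neq0 : PI <> 0. Proof. pose proof PI_RGT_0; lra. Qed.

Lemma useq_Lam f x N : (forall z, continuous f z) ->
  fst (useq (fun n => IZR (Z.abs n)) f x N) = LN f x N /\ snd (useq (fun n => IZR (Z.abs n)) f x N) = 0.
Proof.
  intros Hf. unfold useq. rewrite sym_sum.
  assert (H0 : hterm (fun n => IZR (Z.abs n)) f x 0 = (0,0)).
  { unfold hterm. apply injective_projections; simpl; ring. }
  rewrite H0. change (plus (0,0) ?p) with (Cplus (0,0) p).
  simpl fst; simpl snd. rewrite fst_psum, snd_psum. split.
  - rewrite Rplus_0_l. apply rsum_ext. intros k.
    destruct (pair_formula (fun n => IZR (Z.abs n)) f x k Hf) as [H1 _]. etransitivity; [apply H1|].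
    cbv beta. rewrite Z.abs_opp, Z.abs_eq by lia. rewrite IZR_S. unfold Ak, Bk. field. apply PI_neq0.
  - rewrite Rplus_0_l. rewrite (rsum_ext _ (fun _ => 0)).
    { clear. induction N; simpl; auto. rewrite IHN; ring. }
    intros k. destruct (pair_formula (fun n => IZR (Z.abs n)) f x k Hf) as [_ H1]. etransitivity; [apply H1|].
    cbv beta. rewrite Z.abs_opp, Z.abs_eq by lia. field. apply PI_neq0.
Qed.

Lemma useq_Hilb f x N : (forall z, continuous f z) ->
  fst (useq (fun n => IZR (Z.sgn n)) f x N) = 0 /\ snd (useq (fun n => IZR (Z.sgn n)) f x N) = KN f x N.
Proof.
  intros Hf. unfold useq. rewrite sym_sum.
  assert (H0 : hterm (fun n => IZR (Z.sgn n)) f x 0 = (0,0)).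
  { unfold hterm. apply injective_projections; simpl; ring. }
  rewrite H0. change (plus (0,0) ?p) with (Cplus (0,0) p).
  simpl fst; simpl snd. rewrite fst_psum, snd_psum. split.
  - rewrite Rplus_0_l. rewrite (rsum_ext _ (fun _ => 0)).
    { clear. induction N; simpl; auto. rewrite IHN; ring. }
    intros k. destruct (pair_formula (fun n => IZR (Z.sgn n)) f x k Hf) as [H1 _]. etransitivity; [apply H1|].
    cbv beta. simpl Z.sgn. field. apply PI_neq0.
  - rewrite Rplus_0_l. apply rsum_ext. intros k.
    destruct (pair_formula (fun n => IZR (Z.sgn n)) f x k Hf) as [_ H1]. etransitivity; [apply H1|].
    cbv beta. simpl Z.sgn. unfold Ak, Bk. field. apply PI_neq0.
Qed.

Lemma trig_comb_le a b c s : Rabs c <= 1 -> Rabs s <= 1 -> Rabs (a * c + b * s) <= Rabs a + Rabs b.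
Proof.
  intros Hc Hs. eapply Rle_trans. apply Rabs_triang. rewrite !Rabs_mult.
  pose proof (Rabs_pos a); pose proof (Rabs_pos b). nra.
Qed.

Lemma PI_gt2 : 2 < PI. Proof. pose proof PI2_1; lra. Qed.

Lemma rsum_cont (t : nat -> R -> R) N x : (forall k, continuous (t k) x) -> continuous (fun y => rsum (fun k => t k y) N) x.
Proof.
  intros H. induction N; simpl.
  - apply continuous_const.
  - apply (cplus (fun y => rsum (fun k => t k y) N) (fun y => t N y)); auto.
Qed.

Lemma rsum_der (t dt : nat -> R -> R) N x : (forall k, is_derive (t k) x (dt k x)) ->
  is_derive (fun y => rsum (fun k => t k y) N) x (rsum (fun k => dt k x) N).
Proof.
  intros H. induction N; simpl.
  - apply (is_derive_const (K:=R_AbsRing) (V:=R_NormedModule)).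
  - apply (is_derive_plus (V:=R_NormedModule) (fun y => rsum (fun k => t k y) N) (fun y => t N y)); auto.
Qed.

Section Four.
Variables f f1 f2 f3 v : R -> R.
Hypothesis D0 : forall x, is_derive f x (f1 x).
Hypothesis D1 : forall x, is_derive f1 x (f2 x).
Hypothesis D2 : forall x, is_derive f2 x (f3 x).
Hypothesis C3 : forall x, continuous f3 x.
Hypothesis P0 : f (2*PI) = f 0.
Hypothesis P1 : f1 (2*PI) = f1 0.
Hypothesis P2 : f2 (2*PI) = f2 0.
Hypothesis Pos : forall x, 0 < f x.
Hypothesis Cv : forall x, continuous v x.
Hypothesis Hv : forall x, v x = - f x * fst (Lam f x) + f1 x * snd (Hilb f x).

Lemma Cf z : continuous f z. Proof. eapply cont_of_der; eauto. Qed.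
Lemma Cf1 z : continuous f1 z. Proof. eapply cont_of_der; eauto. Qed.

Definition EE := 4 * CstF f3.
Lemma EE_pos : 0 <= EE. Proof. unfold EE. pose proof (CstF_pos f3 C3). lra. Qed.

Lemma AB_bound k : Rabs (Ak f k) + Rabs (Bk f k) <= 2 * CstF f3 / (INR (S k))^3.
Proof.
  pose proof (coef_cos f f1 f2 f3 D0 D1 D2 C3 P1 k).
  pose proof (coef_sin f f1 f2 f3 D0 D1 D2 C3 P0 P2 k).
  unfold Ak, Bk. lra.
Qed.

Lemma LN_tail x : forall N M, (1 <= N <= M)%nat -> Rabs (LN f x M - LN f x N) <= EE / INR N.
Proof.
  apply rsum_tail. apply EE_pos. intros k _.
  set (r := INR (S k)). assert (Hr : 1 <= r) by (unfold r; rewrite S_INR; pose proof (pos_INR k); lra).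
  pose proof (AB_bound k) as HB. fold r in HB. pose proof PI_gt2. pose proof (CstF_pos f3 C3).
  rewrite Rabs_mult. rewrite (Rabs_right (r / PI)) by (apply Rle_ge, Rdiv_le_0_compat; lra).
  eapply Rle_trans. apply Rmult_le_compat_l. apply Rdiv_le_0_compat; lra.
  apply trig_comb_le; apply Rabs_le. apply COS_bound. apply SIN_bound.
  eapply Rle_trans. apply Rmult_le_compat_l. apply Rdiv_le_0_compat; lra. apply HB.
  unfold EE. apply Rle_trans with (2 * CstF f3 / r ^ 2).
  - replace (r / PI * (2 * CstF f3 / r ^ 3)) with (/PI * (2 * CstF f3 / r^2)) by (field; lra).
    assert (0 <= 2 * CstF f3 / r ^ 2) by (apply Rdiv_le_0_compat; [lra| apply pow_lt; lra]).
    assert (/ PI <= 1). { rewrite <- Rinv_1. apply Rinv_le_contravar; lra. }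
    apply Rle_trans with (1 * (2 * CstF f3 / r ^ 2)). apply Rmult_le_compat_r; auto. lra.
  - unfold Rdiv. apply Rmult_le_compat_r. apply Rlt_le, Rinv_0_lt_compat, pow_lt; lra. lra.
Qed.

Lemma KN_tail x : forall N M, (1 <= N <= M)%nat -> Rabs (KN f x M - KN f x N) <= EE / INR N.
Proof.
  apply rsum_tail. apply EE_pos. intros k _.
  set (r := INR (S k)). assert (Hr : 1 <= r) by (unfold r; rewrite S_INR; pose proof (pos_INR k); lra).
  pose proof (AB_bound k) as HB. fold r in HB. pose proof PI_gt2. pose proof (CstF_pos f3 C3).
  rewrite Rabs_mult. rewrite (Rabs_right (/ PI)) by (apply Rle_ge, Rlt_le, Rinv_0_lt_compat; lra).
  replace (Ak f k * sin (r * x) - Bk f k * cos (r * x)) with (Ak f k * sin (r * x) + (- Bk f k) * cos (r * x)) by ring.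
  eapply Rle_trans. apply Rmult_le_compat_l. apply Rlt_le, Rinv_0_lt_compat; lra.
  apply trig_comb_le; apply Rabs_le. apply SIN_bound. apply COS_bound.
  rewrite Rabs_Ropp.
  eapply Rle_trans. apply Rmult_le_compat_l. apply Rlt_le, Rinv_0_lt_compat; lra. apply HB.
  unfold EE. apply Rle_trans with (2 * CstF f3 / r ^ 2).
  - assert (r ^ 2 <= r ^ 3) by (simpl; assert (0 <= r*r) by nra; assert (r*r*1 <= r*r*r) by (apply Rmult_le_compat_l; lra); lra).
    apply Rle_trans with (/ PI * (2 * CstF f3 / r ^ 2)).
    + apply Rmult_le_compat_l. apply Rlt_le, Rinv_0_lt_compat; lra.
      unfold Rdiv. apply Rmult_le_compat_l. lra. apply Rinv_le_contravar; auto. apply pow_lt; lra.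
    + assert (0 <= 2 * CstF f3 / r ^ 2) by (apply Rdiv_le_0_compat; [lra| apply pow_lt; lra]).
      assert (/ PI <= 1). { rewrite <- Rinv_1. apply Rinv_le_contravar; lra. }
    apply Rle_trans with (1 * (2 * CstF f3 / r ^ 2)). apply Rmult_le_compat_r; auto. lra.
  - unfold Rdiv. apply Rmult_le_compat_r. apply Rlt_le, Rinv_0_lt_compat, pow_lt; lra. lra.
Qed.

Lemma approx x N : (1 <= N)%nat ->
  Rabs (fst (Lam f x) - LN f x N) <= EE / INR N /\ Rabs (snd (Hilb f x) - KN f x N) <= EE / INR N.
Proof.
  intros HN. split.
  - pose proof (lim_bound (useq (fun n => IZR (Z.abs n)) f x) EE EE_pos) as HL.
    destruct (useq_Lam f x N Cf) as [E1 _].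
    rewrite Lam_eq, <- E1. refine (proj1 (HL _ N HN)).
    intros N' M HNM. destruct (useq_Lam f x N' Cf) as [-> ->]. destruct (useq_Lam f x M Cf) as [-> ->].
    split. apply LN_tail; auto. rewrite Rminus_diag, Rabs_R0. apply Rdiv_le_0_compat. apply EE_pos. apply lt_0_INR; lia.
  - pose proof (lim_bound (useq (fun n => IZR (Z.sgn n)) f x) EE EE_pos) as HL.
    destruct (useq_Hilb f x N Cf) as [_ E1].
    rewrite Hilb_eq, <- E1. refine (proj2 (HL _ N HN)).
    intros N' M HNM. destruct (useq_Hilb f x N' Cf) as [-> ->]. destruct (useq_Hilb f x M Cf) as [-> ->].
    split. rewrite Rminus_diag, Rabs_R0. apply Rdiv_le_0_compat. apply EE_pos. apply lt_0_INR; lia.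
    apply KN_tail; auto.
Qed.

Lemma KN_der x N : is_derive (fun y => KN f y N) x (LN f x N).
Proof.
  unfold KN, LN.
  apply (rsum_der (fun k y => / PI * (Ak f k * sin (INR (S k) * y) - Bk f k * cos (INR (S k) * y)))
                  (fun k y => INR (S k) / PI * (Ak f k * cos (INR (S k) * y) + Bk f k * sin (INR (S k) * y)))).
  intros k. cbv beta. set (r := INR (S k)). auto_derive; auto. toR. field. apply PI_neq0.
Qed.

Lemma KN_cont x N : continuous (fun y => KN f y N) x.
Proof. apply cder. eexists. apply KN_der. Qed.

Lemma LN_cont x N : continuous (fun y => LN f y N) x.
Proof.
  unfold LN. apply (rsum_cont (fun k y => INR (S k) / PI * (Ak f k * cos (INR (S k) * y) + Bk f k * sin (INR (S k) * y)))).
  intros k. apply (cder (fun y => INR (S k) / PI * (Ak f k * cos (INR (S k) * y) + Bk f k * sin (INR (S k) * y)))).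
  auto_derive; auto.
Qed.

Lemma KN_per N : KN f (2*PI) N = KN f 0 N.
Proof.
  unfold KN. apply rsum_ext. intros k. rewrite (sin_nP (S k)), (cos_nP (S k)). repeat rewrite Rmult_0_r. rewrite sin_0, cos_0. ring.
Qed.

Lemma cinv (g : R -> R) x : continuous g x -> g x <> 0 -> continuous (fun y => / g y) x.
Proof. intros H1 H2. apply (continuous_comp g Rinv); auto. apply continuous_Rinv; auto. Qed.

Lemma f_ne0 x : f x <> 0. Proof. specialize (Pos x); lra. Qed.

Lemma RN_int N : RInt (fun x => (- f x * LN f x N + f1 x * KN f x N) * / (f x * f x)) 0 (2*PI) = 0.
Proof.
  assert (H : is_RInt (fun x => (- f x * LN f x N + f1 x * KN f x N) * / (f x * f x)) 0 (2*PI)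
            (minus ((fun y => - KN f y N * / f y) (2*PI)) ((fun y => - KN f y N * / f y) 0))).
  { apply (is_RInt_derive (fun y => - KN f y N * / f y)).
    - intros x _. eapply dval. apply dmul.
      + apply (is_derive_opp (K:=R_AbsRing) (V:=R_NormedModule) (fun y => KN f y N)). apply KN_der.
      + apply is_derive_inv. apply D0. apply f_ne0.
      + pose proof (f_ne0 x). toR. unfold opp; simpl. field. auto.
    - intros x _. apply cmul.
      + apply cplus. apply cmul. apply (continuous_opp (V:=R_NormedModule) f); apply Cf.
        apply LN_cont. apply cmul. apply Cf1. apply KN_cont.
      + apply cinv. apply cmul; apply Cf. pose proof (Pos x); nra. }
  apply (is_RInt_unique (V:=R_CompleteNormedModule)) in H. rewrite H. cbv beta.
  rewrite KN_per, P0. unfold minus, plus, opp; simpl. toR. ring.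
Qed.

Lemma v_int : RInt (fun x => v x * / (f x * f x)) 0 (2*PI) = 0.
Proof.
  set (Q := RInt (fun x => (Rabs (f x) + Rabs (f1 x)) * / (f x * f x)) 0 (2*PI)).
  set (I0 := RInt (fun x => v x * / (f x * f x)) 0 (2*PI)).
  assert (HP : 0 <= 2*PI) by (pose proof PI_RGT_0; lra).
  assert (Cinv : forall x, continuous (fun y => / (f y * f y)) x).
  { intros x. apply cinv. apply cmul; apply Cf. pose proof (Pos x); nra. }
  assert (CQ : forall x, continuous (fun x => (Rabs (f x) + Rabs (f1 x)) * / (f x * f x)) x).
  { intros x. apply cmul; auto. apply cplus.
    apply (continuous_comp f Rabs). apply Cf. apply continuous_Rabs.
    apply (continuous_comp f1 Rabs). apply Cf1. apply continuous_Rabs. }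
  assert (Hb : forall N, (1 <= N)%nat -> Rabs I0 <= EE / INR N * Q).
  { intros N HN.
    set (g := fun x => v x * / (f x * f x) - (- f x * LN f x N + f1 x * KN f x N) * / (f x * f x)).
    assert (Cg : forall x, continuous g x).
    { intros x. unfold g. apply cplus. apply cmul; auto.
      apply (continuous_opp (V:=R_NormedModule) (fun x => (- f x * LN f x N + f1 x * KN f x N) * / (f x * f x))).
      apply cmul; auto. apply cplus. apply cmul. apply (continuous_opp (V:=R_NormedModule) f); apply Cf.
      apply LN_cont. apply cmul. apply Cf1. apply KN_cont. }
    assert (E : I0 = RInt g 0 (2*PI)).
    { unfold g, I0. rewrite (RInt_minus (V:=R_CompleteNormedModule) (fun x => v x * / (f x * f x))
        (fun x => (- f x * LN f x N + f1 x * KN f x N) * / (f x * f x))).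
      rewrite RN_int. unfold minus, plus, opp, zero; simpl. rewrite Ropp_0. apply eq_sym, Rplus_0_r.
      apply exRI; intros; apply cmul; auto.
      apply exRI; intros; apply cmul; auto. apply cplus. apply cmul. apply (continuous_opp (V:=R_NormedModule) f); apply Cf.
      apply LN_cont. apply cmul. apply Cf1. apply KN_cont. }
    rewrite E. eapply Rle_trans. apply abs_RInt_le; auto. apply exRI; auto.
    unfold Q. rewrite <- (RInt_scal (V:=R_CompleteNormedModule)).
    2:{ apply exRI; auto. }
    apply RInt_le; auto.
    - apply exRI; intros z. apply (continuous_comp g Rabs); auto. apply continuous_Rabs.
    - apply exRI; intros z. apply (cmul (fun _ => EE / INR N)); auto. apply continuous_const.
    - intros x _. unfold g. rewrite Hv.
      destruct (approx x N HN) as [A1 A2].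
      assert (Hf : 0 < / (f x * f x)). { apply Rinv_0_lt_compat. pose proof (Pos x); nra. }
      replace ((- f x * fst (Lam f x) + f1 x * snd (Hilb f x)) * / (f x * f x) -
               (- f x * LN f x N + f1 x * KN f x N) * / (f x * f x))
         with ((- f x * (fst (Lam f x) - LN f x N) + f1 x * (snd (Hilb f x) - KN f x N)) * / (f x * f x)) by ring.
      unfold scal; simpl; unfold mult; simpl.
      rewrite Rabs_mult, (Rabs_right (/ (f x * f x))) by lra.
      replace (EE / INR N * ((Rabs (f x) + Rabs (f1 x)) * / (f x * f x)))
        with ((Rabs (f x) * (EE / INR N) + Rabs (f1 x) * (EE / INR N)) * / (f x * f x)) by ring.
      apply Rmult_le_compat_r; [lra|].
      eapply Rle_trans. apply Rabs_triang. rewrite !Rabs_mult, Rabs_Ropp.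
      apply Rplus_le_compat; apply Rmult_le_compat_l; auto; apply Rabs_pos. }
  assert (HQ : 0 <= Q).
  { unfold Q. apply RInt_ge_0; auto. apply exRI; auto. intros x _.
    apply Rmult_le_pos. pose proof (Rabs_pos (f x)); pose proof (Rabs_pos (f1 x)); lra.
    apply Rlt_le, Rinv_0_lt_compat. pose proof (Pos x); nra. }
  destruct (Req_dec I0 0) as [H0|H0]; auto. exfalso.
  assert (Ha : 0 < Rabs I0) by (apply Rabs_pos_lt; auto).
  destruct (small_nat (EE * Q) (Rabs I0)) as [N [HN HN']]; auto.
  apply Rmult_le_pos; auto. apply EE_pos.
  specialize (Hb N HN). replace (EE / INR N * Q) with (EE * Q / INR N) in Hb by (field; apply not_0_INR; lia).
  lra.
Qed.
End Four.

Definition clamp (a b s : R) := Rmax a (Rmin b s).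
Lemma clamp_in a b s : a <= s <= b -> clamp a b s = s.
Proof. intros H; unfold clamp, Rmax, Rmin; repeat destruct Rle_dec; lra. Qed.
Lemma clamp_lo a b s : a <= b -> s <= a -> clamp a b s = a.
Proof. intros H H'; unfold clamp, Rmax, Rmin; repeat destruct Rle_dec; lra. Qed.
Lemma clamp_hi a b s : a <= b -> b <= s -> clamp a b s = b.
Proof. intros H H'; unfold clamp, Rmax, Rmin; repeat destruct Rle_dec; lra. Qed.
Lemma clamp_range a b s : a <= b -> a <= clamp a b s <= b.
Proof. intros H; unfold clamp, Rmax, Rmin; repeat destruct Rle_dec; lra. Qed.
Lemma clamp_lip a b s s' : a <= b -> Rabs (clamp a b s - clamp a b s') <= Rabs (s - s').
Proof. intros H; unfold clamp, Rmax, Rmin; repeat destruct Rle_dec; unfold Rabs; repeat destruct Rcase_abs; lra. Qed.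

Definition Dab (a b : R) (f : R -> R) (t l : R) :=
  forall eps, 0 < eps -> exists delta, 0 < delta /\
    forall s, a <= s <= b -> s <> t -> Rabs (s - t) < delta -> Rabs ((f s - f t) / (s - t) - l) < eps.

Lemma glue a b (f l : R -> R) : a < b -> (forall t, a <= t <= b -> Dab a b f t (l t)) ->
  forall s0, is_derive (fun s => f (clamp a b s) + (s - clamp a b s) * l (clamp a b s)) s0 (l (clamp a b s0)).
Proof.
  intros Hab HD s0. apply is_derive_Reals. intros eps Heps.
  destruct (Rlt_dec s0 a) as [Ha|Ha].
  - assert (Hd : 0 < a - s0) by lra. exists (mkposreal _ Hd). intros h Hh Hh'. simpl in Hh'.
    rewrite !(clamp_lo a b) by (unfold Rabs in Hh'; destruct Rcase_abs in Hh'; lra).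
    replace ((f a + (s0 + h - a) * l a - (f a + (s0 - a) * l a)) / h - l a) with 0 by (field; auto).
    rewrite Rabs_R0; auto.
  - destruct (Rlt_dec b s0) as [Hb|Hb].
    + assert (Hd : 0 < s0 - b) by lra. exists (mkposreal _ Hd). intros h Hh Hh'. simpl in Hh'.
      rewrite !(clamp_hi a b) by (unfold Rabs in Hh'; destruct Rcase_abs in Hh'; lra).
      replace ((f b + (s0 + h - b) * l b - (f b + (s0 - b) * l b)) / h - l b) with 0 by (field; auto).
      rewrite Rabs_R0; auto.
    + assert (Hin : a <= s0 <= b) by lra.
      destruct (HD s0 Hin eps Heps) as [d0 [Hd0 Hd0']].
      set (dl := if Rlt_dec a s0 then s0 - a else d0).
      set (dr := if Rlt_dec s0 b then b - s0 else d0).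
      assert (Hdl : 0 < dl) by (unfold dl; destruct (Rlt_dec a s0); lra).
      assert (Hdr : 0 < dr) by (unfold dr; destruct (Rlt_dec s0 b); lra).
      assert (Hd : 0 < Rmin d0 (Rmin dl dr)) by (repeat apply Rmin_glb_lt; auto).
      exists (mkposreal _ Hd). intros h Hh Hh'. simpl in Hh'.
      assert (H1 : Rabs h < d0) by (eapply Rlt_le_trans; [apply Hh'|]; apply Rmin_l).
      assert (H2 : Rabs h < dl) by (eapply Rlt_le_trans; [apply Hh'|]; eapply Rle_trans; [apply Rmin_r|apply Rmin_l]).
      assert (H3 : Rabs h < dr) by (eapply Rlt_le_trans; [apply Hh'|]; eapply Rle_trans; [apply Rmin_r|apply Rmin_r]).
      rewrite (clamp_in a b s0) by lra. replace (s0 - s0) with 0 by ring.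
      destruct (Rlt_dec (s0 + h) a) as [Hl|Hl].
      * assert (s0 = a).
        { unfold dl in H2; destruct (Rlt_dec a s0); [unfold Rabs in H2; destruct Rcase_abs in H2; lra | lra]. }
        subst s0. rewrite (clamp_lo a b) by lra.
        replace ((f a + (a + h - a) * l a - (f a + 0 * l a)) / h - l a) with 0 by (field; auto).
        rewrite Rabs_R0; auto.
      * destruct (Rlt_dec b (s0 + h)) as [Hr|Hr].
        -- assert (s0 = b).
           { unfold dr in H3; destruct (Rlt_dec s0 b); [unfold Rabs in H3; destruct Rcase_abs in H3; lra | lra]. }
           subst s0. rewrite (clamp_hi a b) by lra.
           replace ((f b + (b + h - b) * l b - (f b + 0 * l b)) / h - l b) with 0 by (field; auto).
           rewrite Rabs_R0; auto.
        -- rewrite (clamp_in a b (s0 + h)) by lra.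
           replace (s0 + h - (s0 + h)) with 0 by ring.
           specialize (Hd0' (s0 + h) ltac:(lra) ltac:(lra)).
           replace (s0 + h - s0) with h in Hd0' by ring.
           replace ((f (s0 + h) + 0 * l (s0 + h) - (f s0 + 0 * l s0)) / h) with ((f (s0 + h) - f s0) / h) by (field; auto).
           apply Hd0'. auto.
Qed.

Lemma within_to_Dab (I : R -> Prop) a b f t l : (forall s, a <= s <= b -> I s) -> a <= t <= b ->
  is_deriv_in I f t l -> Dab a b f t l.
Proof.
  intros HI Ht H eps Heps.
  apply (filterlim_locally (F := within (fun s => I s /\ s <> t) (locally t))) with (eps := mkposreal _ Heps) in H.
  destruct H as [d Hd]. exists d. split. apply cond_pos.
  intros s Hs Hst Hd'. apply (Hd s); auto.
Qed.

Lemma derive_to_Dab a b (g f : R -> R) t l : (forall s, a <= s <= b -> g s = f s) -> a <= t <= b ->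
  is_derive g t l -> Dab a b f t l.
Proof.
  intros Hgf Ht H. apply is_derive_Reals in H. intros eps Heps.
  destruct (H eps Heps) as [d Hd]. exists d. split. apply cond_pos.
  intros s Hs Hst Hsd. specialize (Hd (s - t) ltac:(lra) Hsd).
  replace (t + (s - t)) with s in Hd by ring. rewrite <- !Hgf; auto.
Qed.

Lemma within_proper (I : R -> Prop) a b t : a < b -> (forall s, a <= s <= b -> I s) -> a <= t <= b ->
  ProperFilter' (within (fun s => I s /\ s <> t) (locally t)).
Proof.
  intros Hab HI Ht. constructor. 2:{ apply within_filter, locally_filter. } intros Hf. destruct Hf as [d Hd].
  pose proof (cond_pos d) as Hdp.
  destruct (Rlt_dec t b) as [Htb|Htb].
  - set (y := t + Rmin d (b - t) / 2).
    assert (0 < Rmin d (b - t)) by (apply Rmin_glb_lt; lra).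
    assert (Rmin d (b - t) <= d) by apply Rmin_l. assert (Rmin d (b - t) <= b - t) by apply Rmin_r.
    apply (Hd y).
    + change (Rabs (y - t) < d). unfold y. rewrite Rabs_right; lra.
    + split. apply HI. unfold y; lra. unfold y; lra.
  - set (y := t - Rmin d (t - a) / 2).
    assert (0 < Rmin d (t - a)) by (apply Rmin_glb_lt; lra).
    assert (Rmin d (t - a) <= d) by apply Rmin_l. assert (Rmin d (t - a) <= t - a) by apply Rmin_r.
    apply (Hd y).
    + change (Rabs (y - t) < d). unfold y. rewrite Rabs_left; lra.
    + split. apply HI. unfold y; lra. unfold y; lra.
Qed.

Lemma within_unique (I : R -> Prop) a b (f g : R -> R) t l1 l2 : a < b -> (forall s, a <= s <= b -> I s) -> a <= t <= b ->
  (forall s, I s -> f s = g s) -> I t ->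
  is_deriv_in I f t l1 -> is_deriv_in I g t l2 -> l1 = l2.
Proof.
  intros Hab HI Ht Hfg It H1 H2.
  assert (PF := within_proper I a b t Hab HI Ht).
  apply (filterlim_locally_unique (F := within (fun s => I s /\ s <> t) (locally t))
      (fun s => (g s - g t) / (s - t))); auto.
  unfold is_deriv_in in H1. eapply filterlim_within_ext; [|apply H1].
  intros s [Is _]. rewrite !Hfg; auto.
Qed.

Lemma per_deriv (h h' : R -> R) : (forall x, h (x + 2*PI) = h x) -> (forall x, is_derive h x (h' x)) ->
  forall x, h' (x + 2*PI) = h' x.
Proof.
  intros Hp Hd x.
  assert (H : is_derive (fun y => h (y + 2*PI)) x (h' (x + 2*PI))).
  { eapply dval. apply (is_derive_comp (V:=R_NormedModule) h (fun y => y + 2*PI)). apply Hd.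
    auto_derive; auto. unfold scal; simpl; unfold mult; simpl. toR. ring. }
  apply (is_derive_ext _ h) in H; auto.
  apply is_derive_unique in H. rewrite <- H.
  apply is_derive_unique. auto.
Qed.

Lemma fst_rhs (p : R) (L H : C) (Dv : R) :
  fst (Cplus (Copp (Cmult (RtoC p) L)) (Cmult H (Cmult (Copp Ci) (RtoC Dv)))) = - p * fst L + snd H * Dv.
Proof. destruct L, H; simpl; ring. Qed.

Section Main.
Variable I : R -> Prop.
Variable alpha : R -> R -> R.
Variable d : nat -> nat -> R -> R -> R.
Hypothesis Hper : forall t x, I t -> alpha t (x + 2 * PI) = alpha t x.
Hypothesis Hd0 : forall t x, I t -> d O O t x = alpha t x.
Hypothesis Hdx : forall j k t x, I t -> is_derive (d j k t) x (d j (S k) t x).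
Hypothesis Hdt : forall j k t x, I t -> is_deriv_in I (fun s => d j k s x) t (d (S j) k t x).
Hypothesis Hcont : forall j k t x, I t ->
       filterlim (fun p : R * R => d j k (fst p) (snd p))
         (within (fun p : R * R => I (fst p)) (locally (t, x)))
         (locally (d j k t x)).
Hypothesis Hpos : forall t x, I t -> 0 < alpha t x.
Hypothesis Hev : forall t x, I t ->
     exists v : R,
       is_deriv_in I (fun s => alpha s x) t v /\
       RtoC v =
         Cplus (Copp (Cmult (RtoC (alpha t x)) (Lam (alpha t) x)))
               (Cmult (Hilb (alpha t) x) (Dop (alpha t) x)).
Variables a b : R.
Hypothesis Hab : a < b.
Hypothesis HIab : forall s, a <= s <= b -> I s.

Lemma alpha_der t x : I t -> is_derive (alpha t) x (d 0 1 t x).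
Proof. intros It. apply (is_derive_ext (d 0 0 t)). intros; apply Hd0; auto. apply Hdx; auto. Qed.

Lemma dper t : I t -> forall x, d 0 0 t (x + 2*PI) = d 0 0 t x.
Proof. intros It x. rewrite !Hd0; auto. Qed.

Lemma alpha_tder t x : I t -> is_deriv_in I (fun s => alpha s x) t (d 1 0 t x).
Proof.
  intros It. unfold is_deriv_in. eapply filterlim_within_ext; [|apply (Hdt 0 0 t x It)].
  intros s [Is _]. cbv beta. rewrite !Hd0; auto.
Qed.

Lemma zero_int t : a <= t <= b -> RInt (fun x => d 1 0 t x * / (alpha t x * alpha t x)) 0 (2*PI) = 0.
Proof.
  intros Ht. assert (It : I t) by auto.
  assert (P1' : forall x, d 0 1 t (x + 2*PI) = d 0 1 t x).
  { apply (per_deriv (d 0 0 t)). apply dper; auto. intros; apply Hdx; auto. }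
  assert (P2' : forall x, d 0 2 t (x + 2*PI) = d 0 2 t x).
  { apply (per_deriv (d 0 1 t)). auto. intros; apply Hdx; auto. }
  apply (v_int (alpha t) (d 0 1 t) (d 0 2 t) (d 0 3 t) (d 1 0 t)).
  - intros; apply alpha_der; auto.
  - intros; apply Hdx; auto.
  - intros; apply Hdx; auto.
  - intros; eapply cont_of_der; apply Hdx; auto.
  - specialize (Hper t 0 It). rewrite Rplus_0_l in Hper. auto.
  - specialize (P1' 0). rewrite Rplus_0_l in P1'. auto.
  - specialize (P2' 0). rewrite Rplus_0_l in P2'. auto.
  - intros; apply Hpos; auto.
  - intros; eapply cont_of_der; apply Hdx; auto.
  - intros x. destruct (Hev t x It) as [v0 [Hv1 Hv2]].
    assert (E : v0 = d 1 0 t x).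
    { apply (within_unique I a b (fun s => alpha s x) (fun s => alpha s x) t); auto.
      apply alpha_tder; auto. }
    subst v0. apply (f_equal fst) in Hv2. unfold Dop in Hv2. rewrite fst_rhs in Hv2.
    change (fst (RtoC ?v)) with v in Hv2. rewrite Hv2.
    rewrite (is_derive_unique _ _ _ (alpha_der t x It)). ring.
Qed.

Definition w t x := - d 1 0 t x / (alpha t x)^2.
Definition U s x := / alpha (clamp a b s) x + (s - clamp a b s) * w (clamp a b s) x.

Lemma Ic s : I (clamp a b s).
Proof. apply HIab, clamp_range; lra. Qed.

Lemma alpha_pos_ne t x : I t -> alpha t x <> 0.
Proof. intros It. specialize (Hpos t x It). lra. Qed.

Lemma U_der x s0 : is_derive (fun s => U s x) s0 (w (clamp a b s0) x).
Proof.
  assert (HA : forall t, a <= t <= b -> Dab a b (fun s => alpha s x) t (d 1 0 t x)).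
  { intros t Ht. eapply within_to_Dab; eauto. apply alpha_tder; auto. }
  pose proof (glue a b (fun s => alpha s x) (fun t => d 1 0 t x) Hab HA) as Gh.
  set (ah := fun s => alpha (clamp a b s) x + (s - clamp a b s) * d 1 0 (clamp a b s) x).
  assert (Hah : forall s, a <= s <= b -> ah s = alpha s x).
  { intros s Hs. unfold ah. rewrite (clamp_in a b s Hs). ring. }
  assert (HB : forall t, a <= t <= b -> Dab a b (fun s => / alpha s x) t (w t x)).
  { intros t Ht. apply (derive_to_Dab a b (fun s => / ah s)); auto.
    - intros s Hs. rewrite Hah; auto.
    - eapply dval. apply is_derive_inv. apply Gh. rewrite Hah; auto. apply alpha_pos_ne; auto.
      rewrite (clamp_in a b t Ht), Hah by auto. reflexivity. }
  apply (glue a b (fun s => / alpha s x) (fun t => w t x) Hab HB).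
Qed.

Lemma cmul2 (f g : R * R -> R) z : continuous f z -> continuous g z -> continuous (fun y => f y * g y) z.
Proof. intros; apply (continuous_mult (K:=R_AbsRing)); auto. Qed.
Lemma copp2 (f : R * R -> R) z : continuous f z -> continuous (fun y => - f y) z.
Proof. intros; apply (continuous_opp (V:=R_NormedModule) f); auto. Qed.
Lemma cinv2 (f : R * R -> R) z : continuous f z -> f z <> 0 -> continuous (fun y => / f y) z.
Proof. intros H1 H2. apply (continuous_comp f Rinv); auto. apply continuous_Rinv; auto. Qed.

Lemma dcl_cont j k z0 : continuous (fun z : R * R => d j k (clamp a b (fst z)) (snd z)) z0.
Proof.
  unfold continuous.
  apply (filterlim_comp _ _ _ (fun z : R * R => (clamp a b (fst z), snd z)) (fun p : R * R => d j k (fst p) (snd p))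
     _ (within (fun p : R * R => I (fst p)) (locally (clamp a b (fst z0), snd z0)))).
  - intros P [eps HP]. exists eps. intros z Hz. apply HP.
    + destruct Hz as [H1 H2]. split; simpl.
      * change (Rabs (clamp a b (fst z) - clamp a b (fst z0)) < eps).
        eapply Rle_lt_trans. apply clamp_lip; lra. apply H1.
      * apply H2.
    + simpl. apply Ic.
  - apply Hcont. apply Ic.
Qed.

Lemma W_cont z0 : continuous (fun z : R * R => w (clamp a b (fst z)) (snd z)) z0.
Proof.
  apply (continuous_ext (fun z : R * R => - d 1 0 (clamp a b (fst z)) (snd z) *
       / (d 0 0 (clamp a b (fst z)) (snd z) * (d 0 0 (clamp a b (fst z)) (snd z) * 1)))).
  { intros z. unfold w. rewrite Hd0 by apply Ic. unfold Rdiv. simpl. ring. }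
  apply cmul2. apply copp2. apply dcl_cont.
  apply cinv2. apply cmul2. apply dcl_cont. apply cmul2. apply dcl_cont. apply continuous_const.
  rewrite Hd0 by apply Ic. rewrite Rmult_1_r. apply Rgt_not_eq, Rmult_lt_0_compat; apply Hpos, Ic.
Qed.

Lemma alpha_cont_x t x : I t -> continuous (alpha t) x.
Proof. intros It. eapply cont_of_der. apply alpha_der; auto. Qed.

Lemma w_cont_x t x : I t -> continuous (fun y => w t y) x.
Proof.
  intros It.
  apply (continuous_ext (fun y => - d 1 0 t y * / (alpha t y * (alpha t y * 1)))).
  { intros y. unfold w, Rdiv. simpl. ring. }
  apply cmul. apply (continuous_opp (V:=R_NormedModule) (d 1 0 t)). eapply cont_of_der; apply Hdx; auto.
  apply cinv. apply cmul. apply alpha_cont_x; auto. apply cmul. apply alpha_cont_x; auto. apply continuous_const.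
  rewrite Rmult_1_r. pose proof (Hpos t x It). nra.
Qed.

Lemma w_int t : a <= t <= b -> RInt (fun x => w t x) 0 (2*PI) = 0.
Proof.
  intros Ht. assert (It : I t) by auto.
  rewrite (RInt_ext _ (fun x => opp (d 1 0 t x * / (alpha t x * alpha t x)))).
  2:{ intros x _. unfold w, opp; simpl. unfold Rdiv. rewrite Ropp_mult_distr_l. f_equal. f_equal. ring. }
  rewrite (RInt_opp (V:=R_CompleteNormedModule)). rewrite zero_int; auto. unfold opp; simpl. toR. ring.
  apply exRI. intros x. apply cmul. eapply cont_of_der; apply Hdx; auto.
  apply cinv. apply cmul; apply alpha_cont_x; auto. pose proof (Hpos t x It). nra.
Qed.

Lemma G_der s0 : is_derive (fun s => RInt (fun x => U s x) 0 (2*PI)) s0 0.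
Proof.
  eapply dval. apply is_derive_RInt_param.
  - apply filter_forall. intros s x _. eexists; apply U_der.
  - intros x _. apply (continuity_2d_pt_ext (fun u v => w (clamp a b u) v)).
    { intros; symmetry; apply is_derive_unique, U_der. }
    apply continuity_2d_pt_filterlim. apply W_cont.
  - apply filter_forall. intros s. apply exRI. intros x. unfold U. apply cplus.
    apply cinv. apply alpha_cont_x, Ic. apply alpha_pos_ne, Ic.
    apply (cmul (fun _ => s - clamp a b s)). apply continuous_const. apply w_cont_x, Ic.
  - rewrite (RInt_ext _ (fun x => w (clamp a b s0) x)).
    apply w_int. apply clamp_range; lra.
    intros x _. apply is_derive_unique, U_der.
Qed.

Lemma key : RInt (fun x => / alpha a x) 0 (2*PI) = RInt (fun x => / alpha b x) 0 (2*PI).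
Proof.
  set (G := fun s => RInt (fun x => U s x) 0 (2*PI)).
  assert (Ga : G a = RInt (fun x => / alpha a x) 0 (2*PI)).
  { unfold G. apply RInt_ext. intros x _. unfold U. rewrite clamp_in by lra. toR. ring. }
  assert (Gb : G b = RInt (fun x => / alpha b x) 0 (2*PI)).
  { unfold G. apply RInt_ext. intros x _. unfold U. rewrite clamp_in by lra. toR. ring. }
  rewrite <- Ga, <- Gb.
  destruct (MVT_gen G a b (fun _ => 0)) as [c [_ Hc]].
  - intros x _. apply G_der.
  - intros x _. apply continuity_pt_filterlim. apply cder. eexists. apply G_der.
  - lra.
Qed.
End Main.

Theorem lemma6p3 (I : R -> Prop) (alpha : R -> R -> R) :
  is_interval I ->
  smooth_IxS I alpha ->
  (forall t x, I t -> 0 < alpha t x) ->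
  (forall t x, I t ->
     exists v : R,
       is_deriv_in I (fun s => alpha s x) t v /\
       RtoC v =
         Cplus (Copp (Cmult (RtoC (alpha t x)) (Lam (alpha t) x)))
               (Cmult (Hilb (alpha t) x) (Dop (alpha t) x))) ->
  forall t1 t2, I t1 -> I t2 ->
    RInt (fun x => / alpha t1 x) 0 (2 * PI) =
    RInt (fun x => / alpha t2 x) 0 (2 * PI).
Proof.
  intros HI [Hper [d [Hd0 [Hdx [Hdt Hcont]]]]] Hpos Hev t1 t2 I1 I2.
  assert (gen : forall a b, a < b -> I a -> I b ->
     RInt (fun x => / alpha a x) 0 (2 * PI) = RInt (fun x => / alpha b x) 0 (2 * PI)).
  { intros a b Hab Ia Ib. apply (key I alpha d); auto.
    intros s Hs. apply (HI a s b); tauto. }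
  destruct (Rtotal_order t1 t2) as [H|[H|H]].
  - apply gen; auto.
  - subst; reflexivity.
  - symmetry; apply gen; auto.
Qed.
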